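(* Let $\mathcal{G}=\widehat{L}(G,\sigma)$ be an affine Kac–Moody group with a geometric twin $BN$-pair $(B^+,B^-,N,W,S)$ with associated subgroups $\mathcal{G}^+,\mathcal{G}^-$, and let $\mathfrak{B}=\mathfrak{B}^+\cup\mathfrak{B}^-$ be its twin city, with chamber sets $\mathcal{C}^{\pm}=\mathcal{G}/B^{\pm}$. Then: (1) the relation on $\mathcal{C}^{\epsilon}$ ($\epsilon\in\{+,-\}$) ''$\delta^{\epsilon}(c_1,c_2)\in W$'' is an equivalence relation, and each equivalence class (connected component of $\mathfrak{B}^{\epsilon}$) together with the restriction of $\delta^{\epsilon}$ is an (affine) building of type $(W,S)$; (2) for each connected component $\Delta^+$ of $\mathfrak{B}^+$ and each connected component $\Delta^-$ of $\mathfrak{B}^-$, the quintuple $(\Delta^+,\Delta^-,\delta^+,\delta^-,\delta^* )$ (restrictions) is a twin building of type $(W,S)$; (3) the connected components of $\mathfrak{B}^{\epsilon}$ are indexed by the elements of $\mathcal{G}/\mathcal{G}^{\epsilon}$; more precisely the component containing $fB^{\epsilon}$ is $\{fhB^{\epsilon}: h\in \mathcal{G}^{\epsilon}\}$.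
   Context: $W$ is the affine Weyl group, $S$ its set of simple reflections. A geometric twin $BN$-pair for $\mathcal{G}$: subgroups $\mathcal{G}^{\pm}$ generating $\mathcal{G}$ such that $(B^+,N,W,S)$ is a $BN$-pair for $\mathcal{G}^+$, $(B^-,N,W,S)$ is a $BN$-pair for $\mathcal{G}^-$, and $(B^+\cap\mathcal{G}^-,B^-\cap\mathcal{G}^+,N,W,S)$ is a twin $BN$-pair for $\mathcal{G}^+\cap\mathcal{G}^-$; moreover $\mathcal{G}$ has the Bruhat twin decomposition $\mathcal{G}=\coprod_{w\in W}B^{\epsilon}wB^{-\epsilon}$ for $\epsilon\in\{+,-\}$ (so $\mathcal{G}^{\epsilon}=\coprod_{w}B^{\epsilon}wB^{\epsilon}$). Twin city: chambers $\mathcal{C}^{\epsilon}=\mathcal{G}/B^{\epsilon}$; Weyl distance $\delta^{\epsilon}(gB^{\epsilon},fB^{\epsilon})=w$ where $g^{-1}f\in B^{\epsilon}wB^{\epsilon}$ if $g^{-1}f\in\mathcal{G}^{\epsilon}$, and $\delta^{\epsilon}=\infty$ otherwise; codistance $\delta^*(gB^{+},fB^{-})=w$ where $g^{-1}f\in B^+wB^-$, and $\delta^*(gB^{-},fB^{+})=w$ where $g^{-1}f\in B^-wB^+$. A building of type $(W,S)$ (W-metric definition): a set $\mathcal{C}$ with $\delta:\mathcal{C}\times\mathcal{C}\to W$ such that (i) $\delta(C,D)=1$ iff $C=D$; (ii) if $\delta(C,D)=w$ and $\delta(C',C)=s\in S$ then $\delta(C',D)\in\{sw,w\}$, and $=sw$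 if $l(sw)=l(w)+1$; (iii) if $\delta(C,D)=w$ then for any $s\in S$ there is $C'$ with $\delta(C',C)=s$, $\delta(C',D)=sw$. A twin building $(\mathcal{C}^+,\mathcal{C}^-,\delta^+,\delta^-,\delta^* )$: both $(\mathcal{C}^{\pm},\delta^{\pm})$ are buildings of type $(W,S)$ and for $X\in\mathcal{C}^{\epsilon}$, $Y,Z\in\mathcal{C}^{-\epsilon}$: (a) $\delta^*(X,Y)=\delta^*(Y,X)^{-1}$; (b) if $\delta^*(X,Y)=w$, $\delta(Y,Z)=s\in S$, $l(ws)=l(w)-1$, then $\delta^*(X,Z)=ws$; (c) if $\delta^*(X,Y)=w$ and $s\in S$ there is $Z$ with $\delta(Y,Z)=s$ and $\delta^*(X,Z)=ws$. *)

(* Defs.v *)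
From Stdlib Require Import List Arith ClassicalEpsilon.

Record Group := {
  gcar :> Type;
  gmul : gcar -> gcar -> gcar;
  ginv : gcar -> gcar;
  gone : gcar;
  gmulA : forall x y z, gmul x (gmul y z) = gmul (gmul x y) z;
  gmul1 : forall x, gmul gone x = x;
  gmulV : forall x, gmul (ginv x) x = gone }.

Arguments gmul {_} _ _.
Arguments ginv {_} _.
Arguments gone {_}.

Declare Scope grp_scope.
Delimit Scope grp_scope with grp.
Notation "x * y" := (gmul x y) : grp_scope.
Notation "x ^-1" := (ginv x) (at level 3, left associativity) : grp_scope.
Notation "1" := gone : grp_scope.
Open Scope grp_scope.

Section GroupSets.
Context {G : Group}.

Definition subgroup (H : G -> Prop) : Prop :=
  H 1 /\ (forall x y, H x -> H y -> H (x * y)) /\ (forall x, H x -> H (x^-1)).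

Definition gen (A : G -> Prop) : G -> Prop :=
  fun g => forall K, subgroup K -> (forall a, A a -> K a) -> K g.

Definition setI (A B : G -> Prop) : G -> Prop := fun g => A g /\ B g.
Definition setU (A B : G -> Prop) : G -> Prop := fun g => A g \/ B g.

Definition lcoset (g : G) (A : G -> Prop) : G -> Prop :=
  fun x => exists a, A a /\ x = g * a.

End GroupSets.

Section Length.
Context {W : Group} (S : W -> Prop).

Definition wprod (l : list W) : W := fold_right (fun s w => s * w) 1 l.

Definition is_len (w : W) (k : nat) : Prop :=
  (exists l, Forall S l /\ length l = k /\ wprod l = w) /\
  (forall l, Forall S l -> wprod l = w -> k <= length l).

(* len_succ w' w : l(w) = l(w') + 1 *)
Definition len_succ (w' w : W) : Prop :=
  (exists k, is_len w' k) /\ forall k, is_len w' k -> is_len w (Nat.succ k).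

End Length.

Section BN.
Context {G W : Group} (S : W -> Prop) (pi : G -> W) (N : G -> Prop).

(* The Weyl group W = N/(B cap N) is encoded by the map pi, which restricted to N
   is a surjective homomorphism onto W (kernel described in BNpair). *)
Definition dcoset (A : G -> Prop) (w : W) (C : G -> Prop) : G -> Prop :=
  fun g => exists n a c, N n /\ pi n = w /\ A a /\ C c /\ g = a * n * c.

Definition dcoset3 (A : G -> Prop) (s : W) (A' : G -> Prop) (w : W) (C : G -> Prop)
  : G -> Prop :=
  fun g => exists n m a a' c, N n /\ pi n = s /\ N m /\ pi m = w /\
     A a /\ A' a' /\ C c /\ g = a * n * a' * m * c.

Definition BNpair (H B : G -> Prop) : Prop :=
  subgroup H /\ subgroup B /\ subgroup N /\
  (forall g, B g -> H g) /\ (forall g, N g -> H g) /\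
  (forall g, H g <-> gen (setU B N) g) /\
  (forall n m, N n -> N m -> pi (n * m) = pi n * pi m) /\
  (forall w, exists n, N n /\ pi n = w) /\
  (forall n, N n -> (pi n = 1 <-> B n)) /\
  (forall s, S s -> s * s = 1 /\ s <> 1) /\
  (forall w, gen S w) /\
  (forall s w n m b, S s -> N n -> pi n = s -> N m -> pi m = w -> B b ->
      dcoset B (s * w) B (n * b * m) \/ dcoset B w B (n * b * m)) /\
  (forall s n, S s -> N n -> pi n = s ->
      ~ (forall g, (exists b, B b /\ g = n * b * n) <-> B g)).

Definition twinBNpair (H Bp Bm : G -> Prop) : Prop :=
  BNpair H Bp /\ BNpair H Bm /\
  (forall n, N n -> (Bp n <-> Bm n)) /\
  (forall s w, S s -> len_succ S (s * w) w ->
     forall g, dcoset3 Bp s Bp w Bm g <-> dcoset Bp (s * w) Bm g) /\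
  (forall s w, S s -> len_succ S (s * w) w ->
     forall g, dcoset3 Bm s Bm w Bp g <-> dcoset Bm (s * w) Bp g) /\
  (forall s n, S s -> N n -> pi n = s ->
     ~ exists g, (exists b, Bp b /\ g = b * n) /\ Bm g).

Definition geometric_twinBN (Gp Gm Bp Bm : G -> Prop) : Prop :=
  subgroup Gp /\ subgroup Gm /\
  (forall g, gen (setU Gp Gm) g) /\
  BNpair Gp Bp /\ BNpair Gm Bm /\
  twinBNpair (setI Gp Gm) (setI Bp Gm) (setI Bm Gp) /\
  (forall g, exists w, dcoset Bp w Bm g /\ forall w', dcoset Bp w' Bm g -> w' = w) /\
  (forall g, exists w, dcoset Bm w Bp g /\ forall w', dcoset Bm w' Bp g -> w' = w).

End BN.

Section Buildings.
Context {W : Group} (S : W -> Prop).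

Definition building (C : Type) (delta : C -> C -> W) : Prop :=
  (forall X Y, delta X Y = 1 <-> X = Y) /\
  (forall X Y X' w s, delta X Y = w -> delta X' X = s -> S s ->
      (delta X' Y = s * w \/ delta X' Y = w) /\
      (len_succ S w (s * w) -> delta X' Y = s * w)) /\
  (forall X Y s, S s -> exists X', delta X' X = s /\ delta X' Y = s * delta X Y).

Definition twin_building (Cp Cm : Type) (dp : Cp -> Cp -> W) (dm : Cm -> Cm -> W)
  (dpm : Cp -> Cm -> W) (dmp : Cm -> Cp -> W) : Prop :=
  building Cp dp /\ building Cm dm /\
  (forall X Y, dpm X Y = (dmp Y X)^-1) /\
  (forall X Y, dmp X Y = (dpm Y X)^-1) /\
  (forall X Y Z w s, dpm X Y = w -> dm Y Z = s -> S s -> len_succ S (w * s) w ->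
      dpm X Z = w * s) /\
  (forall X Y Z w s, dmp X Y = w -> dp Y Z = s -> S s -> len_succ S (w * s) w ->
      dmp X Z = w * s) /\
  (forall X Y s, S s -> exists Z, dm Y Z = s /\ dpm X Z = dpm X Y * s) /\
  (forall X Y s, S s -> exists Z, dp Y Z = s /\ dmp X Z = dmp X Y * s).

End Buildings.

Section TwinCity.
Context {G W : Group} (pi : G -> W) (N : G -> Prop).

Definition chamber (B : G -> Prop) : Type := { X : G -> Prop | exists g, X = lcoset g B }.

Definition dist_rel (Ge B : G -> Prop) (X Y : chamber B) (w : W) : Prop :=
  exists g f, proj1_sig X = lcoset g B /\ proj1_sig Y = lcoset f B /\
    Ge (g^-1 * f) /\ dcoset pi N B w B (g^-1 * f).

(* delta^e : C^e x C^e -> W u {infinity};  None stands for infinity *)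
Definition dist (Ge B : G -> Prop) (X Y : chamber B) : option W :=
  epsilon (inhabits None) (fun o => match o with
    | Some w => dist_rel Ge B X Y w
    | None => ~ exists w, dist_rel Ge B X Y w end).

Definition codist_rel (B B' : G -> Prop) (X : chamber B) (Y : chamber B') (w : W) : Prop :=
  exists g f, proj1_sig X = lcoset g B /\ proj1_sig Y = lcoset f B' /\
    dcoset pi N B w B' (g^-1 * f).

Definition codist (B B' : G -> Prop) (X : chamber B) (Y : chamber B') : W :=
  epsilon (inhabits 1) (codist_rel B B' X Y).

Definition connected (Ge B : G -> Prop) (X Y : chamber B) : Prop :=
  dist Ge B X Y <> None.

Definition component (Ge B : G -> Prop) (X0 : chamber B) : Type :=
  { X : chamber B | connected Ge B X0 X }.

(* restriction of delta^e to a component (values are in W there) *)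
Definition dist_comp (Ge B : G -> Prop) (X0 : chamber B)
  (X Y : component Ge B X0) : W :=
  match dist Ge B (proj1_sig X) (proj1_sig Y) with Some w => w | None => 1 end.

Definition codist_comp (Gp Bp Gm Bm : G -> Prop) (X0 : chamber Bp) (Y0 : chamber Bm)
  (X : component Gp Bp X0) (Y : component Gm Bm Y0) : W :=
  codist Bp Bm (proj1_sig X) (proj1_sig Y).

Definition cham (B : G -> Prop) (f : G) : chamber B :=
  exist _ (lcoset f B) (ex_intro _ f eq_refl).

Definition equivalence {T : Type} (R : T -> T -> Prop) : Prop :=
  (forall x, R x x) /\ (forall x y, R x y -> R y x) /\
  (forall x y z, R x y -> R y z -> R x z).

Definition part1 (S : W -> Prop) (Ge B : G -> Prop) : Prop :=
  equivalence (connected Ge B) /\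
  forall X0 : chamber B, building S (component Ge B X0) (dist_comp Ge B X0).

Definition part3 (Ge B : G -> Prop) : Prop :=
  (forall (f : G) (X : chamber B),
     connected Ge B (cham B f) X <-> exists h, Ge h /\ proj1_sig X = lcoset (f * h) B) /\
  (forall f f' : G, connected Ge B (cham B f) (cham B f') <-> Ge (f^-1 * f')).

End TwinCity.

(* Main.v *)
Require Import Defs.
From Stdlib Require Import List Arith Lia ClassicalEpsilon Classical FunctionalExtensionality PropExtensionality ProofIrrelevance.
Open Scope grp_scope.

Section GroupLemmas.
Context {G : Group}.
Implicit Types x y z : G.

Lemma mulrV x : x * x^-1 = 1.
Proof.
  assert (H : (x * x^-1) * (x * x^-1) = x * x^-1).
  { rewrite <- gmulA. rewrite (gmulA G x^-1 x x^-1). rewrite gmulV, gmul1. reflexivity. }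
  transitivity ((x*x^-1)^-1 * ((x*x^-1)*(x*x^-1))).
  - rewrite gmulA, gmulV, gmul1. reflexivity.
  - rewrite H. apply gmulV.
Qed.

Lemma mulr1 x : x * 1 = x.
Proof. transitivity (x * (x^-1 * x)). rewrite gmulV; reflexivity.
  rewrite gmulA, mulrV, gmul1. reflexivity. Qed.

Lemma mulVK x y : y * x^-1 * x = y.
Proof. rewrite <- gmulA, gmulV, mulr1. reflexivity. Qed.
Lemma mulKV x y : y * x * x^-1 = y.
Proof. rewrite <- gmulA, mulrV, mulr1. reflexivity. Qed.
Lemma mulKl x y : x^-1 * (x * y) = y.
Proof. rewrite gmulA, gmulV, gmul1. reflexivity. Qed.
Lemma mulKr x y : x * (x^-1 * y) = y.
Proof. rewrite gmulA, mulrV, gmul1. reflexivity. Qed.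

Lemma inv_uniq x y : x * y = 1 -> x^-1 = y.
Proof. intro H. transitivity (x^-1 * (x * y)). rewrite H, mulr1; reflexivity.
  apply mulKl. Qed.
Lemma invK x : (x^-1)^-1 = x.
Proof. apply inv_uniq. apply gmulV. Qed.
Lemma invM x y : (x * y)^-1 = y^-1 * x^-1.
Proof. apply inv_uniq. rewrite gmulA, mulKV, mulrV. reflexivity. Qed.
Lemma inv1 : (1 : G)^-1 = 1.
Proof. apply inv_uniq. apply mulr1. Qed.

Lemma mul_cancel_l x y z : x * y = x * z -> y = z.
Proof. intro H. rewrite <- (mulKl x y), H, mulKl. reflexivity. Qed.
Lemma mul_cancel_r x y z : y * x = z * x -> y = z.
Proof. intro H. rewrite <- (mulKV x y), H, mulKV. reflexivity. Qed.

Lemma sg1 (K : G -> Prop) : subgroup K -> K 1. Proof. intros (a&b&c); auto. Qed.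
Lemma sgM (K : G -> Prop) x y : subgroup K -> K x -> K y -> K (x*y). Proof. intros (a&b&c); auto. Qed.
Lemma sgV (K : G -> Prop) x : subgroup K -> K x -> K (x^-1). Proof. intros (a&b&c); auto. Qed.
Lemma sgVr (K : G -> Prop) x : subgroup K -> K (x^-1) -> K x.
Proof. intros h k. rewrite <- (invK x). apply sgV; auto. Qed.

End GroupLemmas.

Ltac gsimpl := repeat progress (rewrite ?invM, ?invK, ?inv1, ?gmulA, ?gmulV, ?mulrV, ?gmul1, ?mulr1, ?mulVK, ?mulKV).
Open Scope grp_scope.

Lemma ex_min (P : nat -> Prop) : (exists n, P n) -> exists n, P n /\ forall m, P m -> (n <= m)%nat.
Proof.
  intros [n Hn]. induction n as [n IH] using lt_wf_ind.
  destruct (classic (exists m, (m < n)%nat /\ P m)) as [[m [Hm Pm]]|Hno].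
  - exact (IH m Hm Pm).
  - exists n. split; auto. intros m Pm. destruct (le_lt_dec n m); auto.
    exfalso; apply Hno; eauto.
Qed.

Section Len.
Context {W : Group} (SS : W -> Prop)
  (Sinv : forall s, SS s -> s * s = 1 /\ s <> 1) (Sgen : forall w, gen SS w).

Lemma Sinv_eq s : SS s -> s^-1 = s.
Proof. intro h. apply inv_uniq. apply Sinv; auto. Qed.

Lemma wprod_app (l1 l2 : list W) : wprod (l1 ++ l2) = wprod l1 * wprod l2.
Proof. induction l1; simpl. rewrite gmul1; auto. rewrite IHl1, gmulA; auto. Qed.

Lemma wprod_rev l : Forall SS l -> wprod (rev l) = (wprod l)^-1.
Proof. induction 1 as [|x l Hx Hl IH]; simpl. rewrite inv1; auto.
  rewrite wprod_app, IH. simpl. rewrite mulr1, invM, (Sinv_eq x Hx); auto. Qed.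

Lemma words w : exists l, Forall SS l /\ wprod l = w.
Proof.
  apply (Sgen w).
  - split; [|split].
    + exists nil; auto.
    + intros x y [l1 [h1 e1]] [l2 [h2 e2]]. exists (l1 ++ l2).
      split. apply Forall_app; auto. rewrite wprod_app; subst; auto.
    + intros x [l [h e]]. exists (rev l). split. apply Forall_rev; auto.
      rewrite wprod_rev; subst; auto.
  - intros a ha. exists (a :: nil). split; auto. simpl. apply mulr1.
Qed.

Lemma len_ex w : exists k, is_len SS w k.
Proof.
  destruct (ex_min (fun k => exists l, Forall SS l /\ length l = k /\ wprod l = w)) as [k [Hk Hmin]].
  { destruct (words w) as [l [h e]]. eauto. }
  exists k. split; auto. intros l h e. apply Hmin. eauto.
Qed.

Definition len (w : W) : nat := epsilon (inhabits 0%nat) (fun k => is_len SS w k).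
Lemma len_spec w : is_len SS w (len w).
Proof. unfold len. apply epsilon_spec. apply len_ex. Qed.
Lemma len_min w l : Forall SS l -> wprod l = w -> (len w <= length l)%nat.
Proof. intros. apply (proj2 (len_spec w)); auto. Qed.
Lemma len_word w : exists l, Forall SS l /\ length l = len w /\ wprod l = w.
Proof. apply (proj1 (len_spec w)). Qed.
Lemma is_len_uniq w k : is_len SS w k -> k = len w.
Proof. intros [[l [h [e1 e2]]] m]. pose proof (len_min w l h e2).
  destruct (len_word w) as [l' [h' [e1' e2']]]. pose proof (m l' h' e2'). lia. Qed.
Lemma len_succ_iff a b : len_succ SS a b <-> len b = Datatypes.S (len a).
Proof. split.
  - intros [_ H]. symmetry. apply is_len_uniq. apply H. apply len_spec.
  - intros e. split. exists (len a). apply len_spec. intros k hk.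
    apply is_len_uniq in hk. rewrite hk.
    replace (Nat.succ (len a)) with (len b) by (rewrite e; reflexivity). apply len_spec. Qed.

Lemma len_inv_le w : (len (w^-1) <= len w)%nat.
Proof. destruct (len_word w) as [l [h [e1 e2]]]. rewrite <- e1.
  rewrite <- (length_rev l). apply len_min. apply Forall_rev; auto. rewrite wprod_rev; subst; auto. Qed.
Lemma len_inv w : len (w^-1) = len w.
Proof. pose proof (len_inv_le w). pose proof (len_inv_le (w^-1)). rewrite invK in H0. lia. Qed.

Lemma len_mulr w t : SS t -> Nat.le (len (w * t)) (Datatypes.S (len w)).
Proof. intro ht. destruct (len_word w) as [l [h [e1 e2]]].
  replace (Datatypes.S (len w)) with (length (l ++ t :: nil)) by (rewrite length_app; simpl; lia).
  apply len_min. apply Forall_app; auto. rewrite wprod_app; simpl; rewrite mulr1; subst; auto. Qed.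
Lemma len_mull w t : SS t -> Nat.le (len (t * w)) (Datatypes.S (len w)).
Proof. intro ht. destruct (len_word w) as [l [h [e1 e2]]].
  replace (Datatypes.S (len w)) with (length (t :: l)) by (simpl; lia).
  apply len_min. constructor; auto. simpl; subst; auto. Qed.

Lemma len1 : len 1 = 0%nat.
Proof. pose proof (len_min 1 nil (Forall_nil _) eq_refl). simpl in H. lia. Qed.
Lemma len0 w : len w = 0%nat -> w = 1.
Proof. intro e. destruct (len_word w) as [l [h [e1 e2]]]. destruct l; simpl in *; try lia. auto. Qed.

Lemma len_decr w k : len w = Datatypes.S k -> exists w' t, SS t /\ w = w' * t /\ len w' = k.
Proof. intro e. destruct (len_word w) as [l [h [e1 e2]]].
  destruct (exists_last (l := l)) as [l' [t el]]. { intro; subst; simpl in *; lia. }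
  subst l. apply Forall_app in h as [h1 h2]. inversion h2 as [|? ? Ht]; subst.
  assert (E : wprod (l' ++ t :: nil) = wprod l' * t) by (rewrite wprod_app; simpl; rewrite mulr1; auto).
  rewrite E in *.
  exists (wprod l'), t. split; auto. split; auto.
  rewrite length_app in e1; simpl in e1.
  pose proof (len_min (wprod l') l' h1 eq_refl).
  pose proof (len_mulr (wprod l') t Ht). lia.
Qed.

Lemma len_decl w k : len w = Datatypes.S k -> exists s v, SS s /\ w = s * v /\ len v = k.
Proof. intro e. destruct (len_word w) as [l [h [e1 e2]]].
  destruct l as [|s l]; simpl in *; try lia. inversion h; subst.
  exists s, (wprod l). split; auto. split; auto.
  pose proof (len_min (wprod l) l H2 eq_refl).
  pose proof (len_mull (wprod l) s H1). lia.
Qed.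

End Len.
Open Scope grp_scope.

Section BN.
Context {G W : Group} (SS : W -> Prop) (pi : G -> W) (N H B : G -> Prop)
  (hBN : BNpair SS pi N H B).

Local Notation C w := (dcoset pi N B w B).
Ltac bnd := destruct hBN as (sgH & sgB & sgN & BH & NH & Hgen & hom & surj & ker & Sinv & Sgen & bn2 & bn3).

Lemma bn_sgB : subgroup B. Proof. bnd; auto. Qed.
Lemma bn_sgN : subgroup N. Proof. bnd; auto. Qed.
Lemma bn_sgH : subgroup H. Proof. bnd; auto. Qed.
Lemma bn_BH g : B g -> H g. Proof. bnd; auto. Qed.
Lemma bn_NH g : N g -> H g. Proof. bnd; auto. Qed.
Lemma bn_hom n m : N n -> N m -> pi (n * m) = pi n * pi m. Proof. bnd; auto. Qed.
Lemma bn_surj w : exists n, N n /\ pi n = w. Proof. bnd; auto. Qed.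
Lemma bn_ker n : N n -> (pi n = 1 <-> B n). Proof. bnd; auto. Qed.
Lemma bn_Sinv s : SS s -> s * s = 1 /\ s <> 1. Proof. bnd; auto. Qed.
Lemma bn_Sgen w : gen SS w. Proof. bnd; auto. Qed.
Lemma bn_gen g : H g -> gen (setU B N) g. Proof. bnd; apply Hgen. Qed.
Lemma bn_2 s w n m b : SS s -> N n -> pi n = s -> N m -> pi m = w -> B b ->
      C (s * w) (n * b * m) \/ C w (n * b * m).
Proof. bnd; auto. Qed.

Lemma NM x y : N x -> N y -> N (x * y). Proof. apply sgM, bn_sgN. Qed.
Lemma NV x : N x -> N (x^-1). Proof. apply sgV, bn_sgN. Qed.
Lemma N1 : N 1. Proof. apply sg1, bn_sgN. Qed.
Lemma BM x y : B x -> B y -> B (x * y). Proof. apply sgM, bn_sgB. Qed.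
Lemma BV x : B x -> B (x^-1). Proof. apply sgV, bn_sgB. Qed.
Lemma B1 : B 1. Proof. apply sg1, bn_sgB. Qed.
Local Hint Resolve NM NV N1 BM BV B1 : bn.

Lemma pi1 : pi 1 = 1.
Proof. pose proof (bn_hom 1 1 (sg1 _ bn_sgN) (sg1 _ bn_sgN)) as e. rewrite gmul1 in e.
  symmetry. apply (mul_cancel_l (pi 1)). rewrite mulr1. exact e. Qed.

Lemma piV n : N n -> pi (n^-1) = (pi n)^-1.
Proof. intro hn. pose proof (bn_hom (n^-1) n (sgV _ _ bn_sgN hn) hn) as e.
  rewrite gmulV, pi1 in e. apply (mul_cancel_r (pi n)). rewrite <- e, gmulV. auto. Qed.

Lemma C_inv w g : C w g -> C (w^-1) (g^-1).
Proof. intros (n & a & c & hn & e & ha & hc & ->).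
  exists (n^-1), (c^-1), (a^-1). repeat split.
  apply sgV; auto; apply bn_sgN. rewrite piV; subst; auto.
  apply sgV; auto; apply bn_sgB. apply sgV; auto; apply bn_sgB.
  rewrite !invM, !gmulA. auto. Qed.

Lemma C_Bl b w g : B b -> C w g -> C w (b * g).
Proof. intros hb (n & a & c & hn & e & ha & hc & ->).
  exists n, (b*a), c. repeat split; auto. apply sgM; auto; apply bn_sgB.
  rewrite !gmulA. auto. Qed.
Lemma C_Br b w g : B b -> C w g -> C w (g * b).
Proof. intros hb (n & a & c & hn & e & ha & hc & ->).
  exists n, a, (c*b). repeat split; auto. apply sgM; auto; apply bn_sgB.
  rewrite !gmulA. auto. Qed.

Lemma C1 g : C 1 g <-> B g.
Proof. split.
  - intros (n & a & c & hn & e & ha & hc & ->). apply (bn_ker n hn) in e.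
    repeat apply sgM; auto; apply bn_sgB.
  - intro hg. exists 1, 1, g. repeat split; auto. apply sg1, bn_sgN. apply pi1.
    apply sg1, bn_sgB. rewrite !gmul1; auto. Qed.

Lemma C_N n : N n -> C (pi n) n.
Proof. intro hn. exists n, 1, 1. repeat split; auto. apply sg1, bn_sgB. apply sg1, bn_sgB.
  rewrite gmul1, mulr1. auto. Qed.

Lemma C_s_w s w x y : SS s -> C s x -> C w y -> C (s * w) (x * y) \/ C w (x * y).
Proof. intros hs (n & a & c & hn & e & ha & hc & ->) (m & a' & c' & hm & e' & ha' & hc' & ->).
  assert (E : a * n * c * (a' * m * c') = a * (n * (c * a') * m) * c') by (rewrite !gmulA; auto).
  rewrite E. destruct (bn_2 s w n m (c * a') hs hn e hm e') as [h|h].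
  apply sgM; auto; apply bn_sgB.
  left; apply C_Br; auto; apply C_Bl; auto.
  right; apply C_Br; auto; apply C_Bl; auto. Qed.

Lemma Sinv_eq' s : SS s -> s^-1 = s.
Proof. intro h. apply inv_uniq. apply bn_Sinv; auto. Qed.

Lemma C_w_s u t z y : SS t -> C u z -> C t y -> C (u * t) (z * y) \/ C u (z * y).
Proof. intros ht hz hy. apply C_inv in hz. apply C_inv in hy.
  rewrite (Sinv_eq' t ht) in hy.
  destruct (C_s_w t (u^-1) (y^-1) (z^-1) ht hy hz) as [h|h]; apply C_inv in h.
  - left. rewrite invM, invK, (Sinv_eq' t ht), !invM, !invK in h. auto.
  - right. rewrite invK, invM, !invK in h. auto. Qed.

Definition Kc (y : G) := exists w, C w y.
Definition Kp (g : G) := forall y, Kc y -> Kc (g * y).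

Lemma Kp_B b : B b -> Kp b.
Proof. intros hb y [w hw]. exists w. apply C_Bl; auto. Qed.
Lemma Kp_M g h : Kp g -> Kp h -> Kp (g * h).
Proof. intros hg hh y hy. rewrite <- gmulA. apply hg, hh, hy. Qed.
Lemma Kp_Ns m : N m -> SS (pi m) -> Kp m.
Proof. intros hm hs y [w hw]. destruct (C_s_w (pi m) w m y hs (C_N m hm) hw) as [h|h]; eexists; eauto. Qed.
Lemma Kp_N_word l : Forall SS l -> forall n, N n -> pi n = wprod l -> Kp n.
Proof. induction 1 as [|s l hs hl IH]; intros n hn e.
  - apply Kp_B. apply bn_ker; auto.
  - destruct (bn_surj s) as [m [hm em]].
    rewrite <- (mulKr m n). apply Kp_M.
    + apply Kp_Ns; auto. rewrite em; auto.
    + apply IH. apply sgM; auto. apply bn_sgN. apply sgV; auto; apply bn_sgN.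
      rewrite bn_hom, piV, e, em; auto. simpl. rewrite gmulA, gmulV, gmul1. auto.
      apply sgV; auto; apply bn_sgN. Qed.
Lemma Kp_N n : N n -> Kp n.
Proof. intro hn. destruct (words SS bn_Sinv bn_Sgen (pi n)) as [l [hl e]].
  eapply Kp_N_word; eauto. Qed.

Lemma C_ex g : H g -> exists w, C w g.
Proof. intro hg. apply bn_gen in hg.
  assert (K : Kp g /\ Kp (g^-1)).
  { apply hg.
    - split; [|split].
      + split; apply Kp_B; try rewrite inv1; apply sg1, bn_sgB.
      + intros x y [h1 h2] [h3 h4]. split. apply Kp_M; auto. rewrite invM. apply Kp_M; auto.
      + intros x [h1 h2]. rewrite invK. split; auto.
    - intros a [h|h]; split.
      apply Kp_B; auto. apply Kp_B, sgV; auto; apply bn_sgB.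
      apply Kp_N; auto. apply Kp_N, sgV; auto; apply bn_sgN. }
  destruct K as [K _]. rewrite <- (mulr1 g). apply K. exists 1. apply C1, sg1, bn_sgB.
Qed.

Lemma C_uniq_aux k : forall w w' g, len SS w = k -> (len SS w <= len SS w')%nat ->
  C w g -> C w' g -> w = w'.
Proof.
  induction k as [k IH] using lt_wf_ind. intros w w' g ek hle hw hw'.
  destruct k as [|k'].
  - apply (len0 SS bn_Sinv bn_Sgen) in ek. subst w. apply C1 in hw.
    destruct hw' as (n & a & c & hn & e & ha & hc & ->).
    assert (B n).
    { replace n with (a^-1 * (a * n * c) * c^-1) by (gsimpl; auto).
      pose proof bn_sgB as sB.
      apply (sgM _ _ _ sB); [apply (sgM _ _ _ sB)|]; auto; apply (sgV _ _ sB); auto. }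
    apply bn_ker in H0; auto. congruence.
  - destruct (len_decl SS bn_Sinv bn_Sgen w k' ek) as [s [v [hs [ew ev]]]].
    destruct hw as (n & a & c & hn & e & ha & hc & eg).
    destruct (bn_surj s) as [m [hm em]].
    set (y := m^-1 * (a^-1 * g)).
    assert (hyv : C v y).
    { exists (m^-1 * n), 1, c. repeat split; auto with bn.
      rewrite bn_hom, piV, em, e, ew, gmulA, gmulV, gmul1; auto with bn.
      unfold y. rewrite eg. gsimpl. auto. }
    assert (hm' : C s (m^-1)).
    { rewrite <- (Sinv_eq' s hs), <- em, <- piV; auto. apply C_N, sgV; auto; apply bn_sgN. }
    assert (hy' : C w' (a^-1 * g)) by (apply C_Bl; auto; apply sgV; auto; apply bn_sgB).
    destruct (C_s_w s w' _ _ hs hm' hy') as [h|h]; fold y in h.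
    + assert (v = s * w').
      { apply (IH k' (Nat.lt_succ_diag_r k') v (s * w') y); auto.
        pose proof (len_mull SS bn_Sinv bn_Sgen (s * w') s hs).
        rewrite gmulA, (proj1 (bn_Sinv s hs)), gmul1 in H0. lia. }
      rewrite ew, H0, gmulA, (proj1 (bn_Sinv s hs)), gmul1. auto.
    + assert (v = w') by (apply (IH k' (Nat.lt_succ_diag_r k') v w' y); auto; lia). subst. lia.
Qed.

Lemma C_uniq w w' g : C w g -> C w' g -> w = w'.
Proof. intros h h'. destruct (le_ge_dec (len SS w) (len SS w')).
  eapply C_uniq_aux; eauto. symmetry; eapply C_uniq_aux; eauto. Qed.

Lemma C_key_aux k : forall s w x y, SS s -> len SS w = k -> len SS (s * w) = Datatypes.S k ->
  C s x -> C w y -> C (s * w) (x * y).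
Proof.
  induction k as [k IH] using lt_wf_ind. intros s w x y hs ek esw hx hy.
  destruct k as [|k'].
  - apply (len0 SS bn_Sinv bn_Sgen) in ek. subst w. apply C1 in hy.
    rewrite mulr1. apply C_Br; auto.
  - destruct (len_decr SS bn_Sinv bn_Sgen w k' ek) as [w' [t [ht [ew ew']]]].
    assert (lsw' : len SS (s * w') = Datatypes.S k').
    { pose proof (len_mull SS bn_Sinv bn_Sgen w' s hs).
      pose proof (len_mulr SS bn_Sinv bn_Sgen (s * w') t ht).
      rewrite ew, gmulA in esw. lia. }
    destruct hy as (n & a & c & hn & e & ha & hc & ey).
    destruct (bn_surj t) as [m [hm em]].
    assert (hy1 : C w' (a * (n * m^-1) * 1)).
    { exists (n * m^-1), a, 1. repeat split; auto with bn.
      rewrite bn_hom, piV, em, e, ew, mulKV; auto with bn. }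
    assert (hy2 : C t (1 * m * c)).
    { exists m, 1, c. repeat split; auto with bn. }
    assert (hxy1 := IH k' (Nat.lt_succ_diag_r k') s w' x _ hs ew' lsw' hx hy1).
    assert (E : x * y = x * (a * (n * m^-1) * 1) * (1 * m * c)).
    { rewrite ey. gsimpl. auto. }
    destruct (C_w_s _ t _ _ ht hxy1 hy2) as [h|h]; rewrite <- E in h.
    + rewrite ew, gmulA. auto.
    + exfalso.
      destruct hx as (n0 & a0 & c0 & hn0 & e0 & ha0 & hc0 & ex).
      assert (hz : C w (c0 * y)).
      { apply C_Bl; auto. exists n, a, c; auto. }
      assert (hn0' : C s (n0^-1)).
      { rewrite <- (Sinv_eq' s hs), <- e0, <- piV; auto. apply C_N; auto with bn. }
      assert (hz' : C (s * w') (a0^-1 * (x * y))) by (apply C_Bl; auto with bn).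
      destruct (C_s_w s _ _ _ hs hn0' hz') as [h'|h'];
        replace (n0^-1 * (a0^-1 * (x * y))) with (c0 * y) in h'
          by (rewrite ex; gsimpl; auto).
      * rewrite gmulA, (proj1 (bn_Sinv s hs)), gmul1 in h'.
        pose proof (C_uniq _ _ _ hz h'). rewrite ew in H0.
        apply (bn_Sinv t ht). apply (mul_cancel_l w'). rewrite mulr1. auto.
      * pose proof (C_uniq _ _ _ hz h'). rewrite H0 in esw.
        rewrite gmulA, (proj1 (bn_Sinv s hs)), gmul1 in esw. lia.
Qed.

Lemma C_key s w x y : SS s -> len SS (s * w) = Datatypes.S (len SS w) ->
  C s x -> C w y -> C (s * w) (x * y).
Proof. intros. eapply C_key_aux; eauto. Qed.

End BN.
Open Scope grp_scope.

Lemma chamber_eq {G : Group} (B : G -> Prop) (X Y : chamber B) : proj1_sig X = proj1_sig Y -> X = Y.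
Proof. destruct X as [x px], Y as [y py]; simpl; intro e; subst; f_equal; apply proof_irrelevance. Qed.

Lemma sig_eq_pi {A : Type} (P : A -> Prop) (X Y : {x : A | P x}) : proj1_sig X = proj1_sig Y -> X = Y.
Proof. destruct X as [x px], Y as [y py]; simpl; intro e; subst; f_equal; apply proof_irrelevance. Qed.

Lemma ch_rep {G : Group} (B : G -> Prop) (X : chamber B) : exists g, proj1_sig X = lcoset g B.
Proof. exact (proj2_sig X). Qed.

Section Ch.
Context {G W : Group} (SS : W -> Prop) (pi : G -> W) (N Ge B : G -> Prop)
  (hBN : BNpair SS pi N Ge B).

Local Notation C w := (dcoset pi N B w B).

Lemma BM' x y : B x -> B y -> B (x * y). Proof. apply (BM SS pi N Ge B hBN). Qed.
Lemma BV' x : B x -> B (x^-1). Proof. apply (BV SS pi N Ge B hBN). Qed.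
Lemma B1' : B 1. Proof. apply (B1 SS pi N Ge B hBN). Qed.
Lemma GM x y : Ge x -> Ge y -> Ge (x * y). Proof. apply sgM, (bn_sgH SS pi N Ge B hBN). Qed.
Lemma GV x : Ge x -> Ge (x^-1). Proof. apply sgV, (bn_sgH SS pi N Ge B hBN). Qed.
Lemma G1 : Ge 1. Proof. apply sg1, (bn_sgH SS pi N Ge B hBN). Qed.
Lemma BG x : B x -> Ge x. Proof. apply (bn_BH SS pi N Ge B hBN). Qed.
Lemma NG x : N x -> Ge x. Proof. apply (bn_NH SS pi N Ge B hBN). Qed.
Lemma NM' x y : N x -> N y -> N (x * y). Proof. apply (NM SS pi N Ge B hBN). Qed.
Lemma NV' x : N x -> N (x^-1). Proof. apply (NV SS pi N Ge B hBN). Qed.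
Lemma N1' : N 1. Proof. apply (N1 SS pi N Ge B hBN). Qed.
Local Hint Resolve BM' BV' B1' GM GV G1 BG NG NM' NV' N1' : ch.

Lemma lc_eq g f : lcoset g B = lcoset f B <-> B (g^-1 * f).
Proof. split.
  - intro e. assert (h : lcoset f B f) by (exists 1; split; [apply B1'|rewrite mulr1; auto]).
    rewrite <- e in h. destruct h as [a [ha ->]]. rewrite mulKl. auto.
  - intro hb. apply functional_extensionality. intro x. apply propositional_extensionality.
    split; intros [a [ha ->]].
    + exists (f^-1 * g * a). split. apply BM'; auto. replace (f^-1 * g) with ((g^-1 * f)^-1) by (gsimpl; auto). auto with ch.
      gsimpl. auto.
    + exists (g^-1 * f * a). split; auto with ch. gsimpl; auto.
Qed.

Lemma dist_rel_iff (X Y : chamber B) g f w : proj1_sig X = lcoset g B -> proj1_sig Y = lcoset f B ->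
  (dist_rel pi N Ge B X Y w <-> Ge (g^-1 * f) /\ C w (g^-1 * f)).
Proof. intros hX hY. split.
  - intros (g' & f' & hX' & hY' & hG & hC).
    rewrite hX in hX'. rewrite hY in hY'. apply lc_eq in hX'. apply lc_eq in hY'.
    assert (hY'' : B (f'^-1 * f)) by (replace (f'^-1 * f) with ((f^-1 * f')^-1) by (gsimpl; auto); auto with ch).
    replace (g^-1 * f) with ((g^-1 * g') * (g'^-1 * f') * (f'^-1 * f)) by (gsimpl; auto).
    split. auto with ch.
    apply (C_Br SS pi N Ge B hBN); auto.
    apply (C_Bl SS pi N Ge B hBN); auto.
  - intros [h1 h2]. exists g, f. auto.
Qed.

Lemma dist_uniq (X Y : chamber B) w w' : dist_rel pi N Ge B X Y w -> dist_rel pi N Ge B X Y w' -> w = w'.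
Proof. intros h h'. destruct (ch_rep B X) as [g hg]. destruct (ch_rep B Y) as [f hf].
  apply (dist_rel_iff X Y g f) in h; auto. apply (dist_rel_iff X Y g f) in h'; auto.
  eapply (C_uniq SS pi N Ge B hBN); [apply h|apply h']. Qed.

Lemma dist_spec (X Y : chamber B) : match dist pi N Ge B X Y with
  | Some w => dist_rel pi N Ge B X Y w | None => ~ exists w, dist_rel pi N Ge B X Y w end.
Proof. unfold dist. apply epsilon_spec.
  destruct (classic (exists w, dist_rel pi N Ge B X Y w)) as [[w h]|h].
  exists (Some w); auto. exists None; auto. Qed.

Lemma dist_some (X Y : chamber B) w : dist_rel pi N Ge B X Y w -> dist pi N Ge B X Y = Some w.
Proof. intro h. pose proof (dist_spec X Y) as s. destruct (dist pi N Ge B X Y) as [w'|].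
  f_equal. eapply dist_uniq; eauto. exfalso; apply s; eauto. Qed.

Lemma connected_iff (X Y : chamber B) g f : proj1_sig X = lcoset g B -> proj1_sig Y = lcoset f B ->
  (connected pi N Ge B X Y <-> Ge (g^-1 * f)).
Proof. intros hX hY. unfold connected. split.
  - intro h. pose proof (dist_spec X Y) as s. destruct (dist pi N Ge B X Y) as [w|].
    apply (dist_rel_iff X Y g f w hX hY) in s. apply s. congruence.
  - intro h. destruct (C_ex SS pi N Ge B hBN _ h) as [w hw].
    rewrite (dist_some X Y w). discriminate. apply (dist_rel_iff X Y g f w hX hY). auto.
Qed.

Lemma comp_Ge X0 (X Y : component pi N Ge B X0) g f :
  proj1_sig (proj1_sig X) = lcoset g B -> proj1_sig (proj1_sig Y) = lcoset f B -> Ge (g^-1 * f).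
Proof. intros hX hY. destruct (ch_rep B X0) as [x0 h0].
  pose proof (proj2_sig X) as cX. pose proof (proj2_sig Y) as cY. simpl in cX, cY.
  apply (connected_iff _ _ x0 g h0 hX) in cX. apply (connected_iff _ _ x0 f h0 hY) in cY.
  replace (g^-1 * f) with ((x0^-1 * g)^-1 * (x0^-1 * f)) by (gsimpl; auto). auto with ch. Qed.

Lemma dist_comp_iff X0 (X Y : component pi N Ge B X0) g f w :
  proj1_sig (proj1_sig X) = lcoset g B -> proj1_sig (proj1_sig Y) = lcoset f B ->
  (dist_comp pi N Ge B X0 X Y = w <-> C w (g^-1 * f)).
Proof. intros hX hY. pose proof (comp_Ge X0 X Y g f hX hY) as hG.
  destruct (C_ex SS pi N Ge B hBN _ hG) as [w0 hw0].
  unfold dist_comp. rewrite (dist_some _ _ w0).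
  - split. intros <-. auto. intro h. eapply (C_uniq SS pi N Ge B hBN); eauto.
  - apply (dist_rel_iff _ _ g f w0 hX hY). auto. Qed.

Lemma dist_comp_spec X0 (X Y : component pi N Ge B X0) g f :
  proj1_sig (proj1_sig X) = lcoset g B -> proj1_sig (proj1_sig Y) = lcoset f B ->
  C (dist_comp pi N Ge B X0 X Y) (g^-1 * f).
Proof. intros. apply (dist_comp_iff X0 X Y g f); auto. Qed.

Lemma part1_proof : part1 pi N SS Ge B.
Proof. split.
  - split; [|split].
    + intro X. destruct (ch_rep B X) as [g hg]. apply (connected_iff X X g g hg hg). rewrite gmulV; auto with ch.
    + intros X Y h. destruct (ch_rep B X) as [g hg]. destruct (ch_rep B Y) as [f hf].
      apply (connected_iff X Y g f hg hf) in h. apply (connected_iff Y X f g hf hg).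
      replace (f^-1 * g) with ((g^-1 * f)^-1) by (gsimpl; auto). auto with ch.
    + intros X Y Z h1 h2. destruct (ch_rep B X) as [g hg]. destruct (ch_rep B Y) as [f hf].
      destruct (ch_rep B Z) as [z hz].
      apply (connected_iff X Y g f hg hf) in h1. apply (connected_iff Y Z f z hf hz) in h2.
      apply (connected_iff X Z g z hg hz).
      replace (g^-1 * z) with ((g^-1 * f) * (f^-1 * z)) by (gsimpl; auto). auto with ch.
  - intro X0. split; [|split].
    + intros X Y. destruct (ch_rep B (proj1_sig X)) as [g hg]. destruct (ch_rep B (proj1_sig Y)) as [f hf].
      rewrite (dist_comp_iff X0 X Y g f 1 hg hf). rewrite (C1 SS pi N Ge B hBN). split.
      * intro h. apply sig_eq_pi, chamber_eq. rewrite hg, hf. apply lc_eq; auto.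
      * intros ->. rewrite hf in hg. apply lc_eq. auto.
    + intros X Y X' w s e1 e2 hs.
      destruct (ch_rep B (proj1_sig X)) as [g hg]. destruct (ch_rep B (proj1_sig Y)) as [f hf].
      destruct (ch_rep B (proj1_sig X')) as [x hx].
      apply (dist_comp_iff X0 X Y g f w hg hf) in e1. apply (dist_comp_iff X0 X' X x g s hx hg) in e2.
      rewrite !(dist_comp_iff X0 X' Y x f _ hx hf).
      replace (x^-1 * f) with ((x^-1 * g) * (g^-1 * f)) by (gsimpl; auto).
      split.
      * apply (C_s_w SS pi N Ge B hBN); auto.
      * intro hl. apply (len_succ_iff SS (bn_Sinv SS pi N Ge B hBN) (bn_Sgen SS pi N Ge B hBN)) in hl.
        apply (C_key SS pi N Ge B hBN); auto.
    + intros X Y s hs.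
      destruct (ch_rep B (proj1_sig X)) as [g hg]. destruct (ch_rep B (proj1_sig Y)) as [f hf].
      pose proof (dist_comp_spec X0 X Y g f hg hf) as hC.
      set (w := dist_comp pi N Ge B X0 X Y) in *.
      destruct hC as (n & a & c & hn & e & ha & hc & E).
      destruct (bn_surj SS pi N Ge B hBN s) as [m [hm em]].
      destruct (ch_rep B X0) as [x0 h0].
      pose proof (proj2_sig X) as cX. simpl in cX. apply (connected_iff _ _ x0 g h0 hg) in cX.
      assert (hc0 : connected pi N Ge B X0 (cham B (g * a * m))).
      { apply (connected_iff X0 (cham B (g * a * m)) x0 (g * a * m) h0 eq_refl).
        replace (x0^-1 * (g * a * m)) with ((x0^-1 * g) * a * m) by (gsimpl; auto). auto with ch. }
      assert (hsi : pi (m^-1) = s).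
      { rewrite (piV SS pi N Ge B hBN); auto. rewrite em. apply (Sinv_eq' SS pi N Ge B hBN); auto. }
      exists (exist _ (cham B (g * a * m)) hc0). split.
      * apply (dist_comp_iff X0 (exist _ (cham B (g * a * m)) hc0) X (g * a * m) g s eq_refl hg).
        exists (m^-1), 1, (a^-1). repeat split; auto with ch. gsimpl. auto.
      * apply (dist_comp_iff X0 (exist _ (cham B (g * a * m)) hc0) Y (g * a * m) f _ eq_refl hf).
        exists (m^-1 * n), 1, c. repeat split; auto with ch.
        rewrite (bn_hom SS pi N Ge B hBN), hsi, e; auto with ch.
        replace f with (g * (g^-1 * f)) by (gsimpl; auto). rewrite E. gsimpl. auto.
Qed.

Lemma part3_proof : part3 pi N Ge B.
Proof. split.
  - intros f X. destruct (ch_rep B X) as [x hx].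
    rewrite (connected_iff (cham B f) X f x eq_refl hx). split.
    + intro h. exists (f^-1 * x). split; auto. rewrite hx. gsimpl. auto.
    + intros [h [hh e]]. rewrite hx in e. apply lc_eq in e.
      replace (f^-1 * x) with (h * ((f * h)^-1 * x)) by (gsimpl; auto).
      replace ((f * h)^-1 * x) with ((x^-1 * (f * h))^-1) by (gsimpl; auto). auto with ch.
  - intros f f'. apply (connected_iff (cham B f) (cham B f') f f' eq_refl eq_refl).
Qed.

End Ch.
Open Scope grp_scope.

Section DC.
Context {G W : Group} (pi : G -> W) (N : G -> Prop).

Lemma dc_l (A C : G -> Prop) w x g : subgroup A -> A x -> dcoset pi N A w C g -> dcoset pi N A w C (x * g).
Proof. intros sA hx (n & a & c & hn & e & ha & hc & ->). exists n, (x * a), c.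
  repeat split; auto. apply sgM; auto. rewrite !gmulA; auto. Qed.
Lemma dc_r (A C : G -> Prop) w x g : subgroup C -> C x -> dcoset pi N A w C g -> dcoset pi N A w C (g * x).
Proof. intros sC hx (n & a & c & hn & e & ha & hc & ->). exists n, a, (c * x).
  repeat split; auto. apply sgM; auto. rewrite !gmulA; auto. Qed.
Lemma dc_mono (A C A' C' : G -> Prop) w g : (forall x, A' x -> A x) -> (forall x, C' x -> C x) ->
  dcoset pi N A' w C' g -> dcoset pi N A w C g.
Proof. intros h1 h2 (n & a & c & hn & e & ha & hc & ->). exists n, a, c. repeat split; auto. Qed.
End DC.

Section Twin.
Context {G W : Group} (SS : W -> Prop) (pi : G -> W) (N : G -> Prop).

Lemma dc_inv Ge B (hBN : BNpair SS pi N Ge B) (A C : G -> Prop) w g : subgroup A -> subgroup C ->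
  dcoset pi N A w C g -> dcoset pi N C (w^-1) A (g^-1).
Proof. intros sA sC (n & a & c & hn & e & ha & hc & ->).
  exists (n^-1), (c^-1), (a^-1). split; [|split; [|split; [|split]]].
  apply (NV SS pi N Ge B hBN); auto. rewrite (piV SS pi N Ge B hBN); subst; auto.
  apply sgV; auto. apply sgV; auto.
  gsimpl; auto. Qed.

Section Co.
Context (Bo Be : G -> Prop) (sBo : subgroup Bo) (sBe : subgroup Be)
  (br : forall g, exists w, dcoset pi N Bo w Be g /\ forall w', dcoset pi N Bo w' Be g -> w' = w).

Lemma lc_eq_gen (B : G -> Prop) g f : subgroup B -> lcoset g B = lcoset f B -> B (g^-1 * f).
Proof. intros sB e. assert (h : lcoset f B f) by (exists 1; split; [apply sg1; auto|rewrite mulr1; auto]).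
  rewrite <- e in h. destruct h as [a [ha ->]]. rewrite mulKl. auto. Qed.

Lemma codist_rel_iff (X : chamber Bo) (Y : chamber Be) g f w :
  proj1_sig X = lcoset g Bo -> proj1_sig Y = lcoset f Be ->
  (codist_rel pi N Bo Be X Y w <-> dcoset pi N Bo w Be (g^-1 * f)).
Proof. intros hX hY. split.
  - intros (g' & f' & hX' & hY' & hC).
    rewrite hX in hX'. rewrite hY in hY'. apply lc_eq_gen in hX'; auto. apply lc_eq_gen in hY'; auto.
    replace (g^-1 * f) with ((g^-1 * g') * (g'^-1 * f') * (f^-1 * f')^-1) by (gsimpl; auto).
    apply dc_r; auto. apply sgV; auto. apply dc_l; auto.
  - intro h. exists g, f. auto. Qed.

Lemma codist_eq (X : chamber Bo) (Y : chamber Be) g f w :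
  proj1_sig X = lcoset g Bo -> proj1_sig Y = lcoset f Be ->
  dcoset pi N Bo w Be (g^-1 * f) -> codist pi N Bo Be X Y = w.
Proof. intros hX hY h. unfold codist.
  assert (hs : codist_rel pi N Bo Be X Y (epsilon (inhabits 1) (codist_rel pi N Bo Be X Y))).
  { apply epsilon_spec. exists w. apply (codist_rel_iff X Y g f w hX hY); auto. }
  apply (codist_rel_iff X Y g f _ hX hY) in hs.
  destruct (br (g^-1 * f)) as [w0 [h0 u]]. rewrite (u _ hs), (u _ h). auto. Qed.

Lemma codist_spec (X : chamber Bo) (Y : chamber Be) g f :
  proj1_sig X = lcoset g Bo -> proj1_sig Y = lcoset f Be ->
  dcoset pi N Bo (codist pi N Bo Be X Y) Be (g^-1 * f).
Proof. intros hX hY. destruct (br (g^-1 * f)) as [w0 [h0 u]].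
  rewrite (codist_eq X Y g f w0 hX hY h0). auto. Qed.
End Co.

Section Key.
Context (Go Bo Ge Be H Bo' Be' : G -> Prop)
  (hBe : BNpair SS pi N Ge Be) (hBe' : BNpair SS pi N H Be') (hBo : BNpair SS pi N Go Bo)
  (HH : forall g, H g <-> Go g /\ Ge g) (HBo' : forall g, Bo' g <-> Bo g /\ Ge g)
  (HBe' : forall g, Be' g <-> Be g /\ Go g)
  (tbn : forall s w, SS s -> len_succ SS (s * w) w -> forall g,
     dcoset3 pi N Be' s Be' w Bo' g <-> dcoset pi N Be' (s * w) Bo' g)
  (br : forall g, exists w, dcoset pi N Bo w Be g /\ forall w', dcoset pi N Bo w' Be g -> w' = w).

Lemma key_claim s w n b m : SS s -> len_succ SS (w * s) w -> N n -> pi n = w -> Be b ->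
  N m -> pi m = s -> dcoset pi N Bo (w * s) Be (n * b * m).
Proof.
  intros hs hl hn en hb hm em.
  pose proof (bn_sgB SS pi N Ge Be hBe) as sBe.
  pose proof (bn_sgB SS pi N Go Bo hBo) as sBo.
  pose proof (bn_sgH SS pi N Ge Be hBe) as sGe.
  pose proof (bn_sgH SS pi N Go Bo hBo) as sGo.
  pose proof (bn_sgB SS pi N H Be' hBe') as sBe'.
  assert (sBo' : subgroup Bo').
  { split; [|split].
    - apply HBo'. split; apply sg1; auto.
    - intros x y hx hy. apply HBo' in hx, hy. apply HBo'. split; apply sgM; tauto.
    - intros x hx. apply HBo' in hx. apply HBo'. split; apply sgV; tauto. }
  assert (NGe : forall x, N x -> Ge x) by apply (bn_NH SS pi N Ge Be hBe).
  assert (NGo : forall x, N x -> Go x) by apply (bn_NH SS pi N Go Bo hBo).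
  assert (BeGe : forall x, Be x -> Ge x) by apply (bn_BH SS pi N Ge Be hBe).
  assert (BoGo : forall x, Bo x -> Go x) by apply (bn_BH SS pi N Go Bo hBo).
  destruct (br (n * b * m)) as [v [hv uv]].
  destruct hv as (k & p & q & hk & ek & hp & hq & E).
  assert (hpGe : Ge p).
  { replace p with (n * b * m * q^-1 * k^-1) by (rewrite E; gsimpl; auto).
    repeat apply sgM; auto; apply sgV; auto. }
  assert (hp' : Bo' p) by (apply HBo'; auto).
  set (h := n^-1 * p * k).
  assert (eh : h = b * m * q^-1) by (unfold h; transitivity (n^-1 * (p * k * q) * q^-1); [gsimpl; auto | rewrite <- E; gsimpl; auto]).
  assert (hH : H h).
  { apply HH. split.
    - unfold h. repeat apply sgM; auto. apply sgV; auto.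
    - rewrite eh. repeat apply sgM; auto. apply sgV; auto. }
  destruct (C_ex SS pi N H Be' hBe' h hH) as [u hu].
  assert (hus : u = s).
  { apply (C_uniq SS pi N Ge Be hBe u s h).
    - apply (dc_mono pi N Be Be Be' Be'); auto; intros x hx; apply HBe' in hx; tauto.
    - rewrite eh. exists m, b, (q^-1). repeat split; auto. apply sgV; auto. }
  subst u. destruct hu as (m' & b' & q' & hm' & em' & hb' & hq' & eh').
  assert (E2 : n * b' * m' = p * k * q'^-1).
  { replace (p * k) with (n * h) by (unfold h; gsimpl; auto). rewrite eh'. gsimpl. auto. }
  pose proof (bn_Sinv SS pi N Ge Be hBe) as Sinv. pose proof (bn_Sgen SS pi N Ge Be hBe) as Sgen.
  assert (hsi : s^-1 = s) by (apply inv_uniq; apply Sinv; auto).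
  assert (hl' : len_succ SS (s * w^-1) (w^-1)).
  { apply (len_succ_iff SS Sinv Sgen). apply (len_succ_iff SS Sinv Sgen) in hl.
    rewrite (len_inv SS Sinv Sgen w).
    replace (s * w^-1) with ((w * s)^-1) by (rewrite invM, hsi; auto).
    rewrite (len_inv SS Sinv Sgen). auto. }
  assert (h3 : dcoset3 pi N Be' s Be' (w^-1) Bo' ((n * b' * m')^-1)).
  { exists (m'^-1), (n^-1), 1, (b'^-1), 1. repeat split.
    - apply (NV SS pi N Ge Be hBe); auto.
    - rewrite (piV SS pi N Ge Be hBe), em', hsi; auto.
    - apply (NV SS pi N Ge Be hBe); auto.
    - rewrite (piV SS pi N Ge Be hBe), en; auto.
    - apply sg1; auto.
    - apply sgV; auto.
    - apply sg1; auto.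
    - gsimpl. auto. }
  apply (tbn s (w^-1) hs hl') in h3.
  apply (dc_inv Ge Be hBe) in h3; auto. rewrite invK, invM, invK, hsi in h3.
  apply (dc_mono pi N Bo Be Bo' Be') in h3;
    [|intros x hx; apply HBo' in hx; tauto|intros x hx; apply HBe' in hx; tauto].
  assert (hv : dcoset pi N Bo v Be (n * b' * m')).
  { rewrite E2. exists k, p, (q'^-1). repeat split; auto. apply sgV; auto. apply HBe' in hq'; tauto. }
  destruct (br (n * b' * m')) as [w0 [_ u0]].
  pose proof (u0 _ h3) as e1. pose proof (u0 _ hv) as e2.
  rewrite E. exists k, p, q. repeat split; auto. congruence.
Qed.

Lemma twin_b Y0 (X : chamber Bo) (Y Z : component pi N Ge Be Y0) w s :
  codist pi N Bo Be X (proj1_sig Y) = w -> dist_comp pi N Ge Be Y0 Y Z = s -> SS s ->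
  len_succ SS (w * s) w -> codist pi N Bo Be X (proj1_sig Z) = w * s.
Proof. intros e1 e2 hs hl.
  pose proof (bn_sgB SS pi N Ge Be hBe) as sBe.
  pose proof (bn_sgB SS pi N Go Bo hBo) as sBo.
  destruct (ch_rep Bo X) as [g hg]. destruct (ch_rep Be (proj1_sig Y)) as [f hf].
  destruct (ch_rep Be (proj1_sig Z)) as [z hz].
  pose proof (codist_spec Bo Be sBo sBe br X _ g f hg hf) as c1. rewrite e1 in c1.
  pose proof (dist_comp_spec SS pi N Ge Be hBe Y0 Y Z f z hf hz) as c2. rewrite e2 in c2.
  apply (codist_eq Bo Be sBo sBe br X _ g z); auto.
  destruct c1 as (n & a & c & hn & en & ha & hc & E1).
  destruct c2 as (m & d & e & hm & em & hd & he & E2).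
  replace (g^-1 * z) with ((g^-1 * f) * (f^-1 * z)) by (gsimpl; auto). rewrite E1, E2.
  replace (a * n * c * (d * m * e)) with (a * (n * (c * d) * m) * e) by (gsimpl; auto).
  apply dc_r; auto. apply dc_l; auto. apply key_claim; auto. apply sgM; auto.
Qed.
End Key.

Section TC.
Context (Bo Ge Be : G -> Prop) (hBe : BNpair SS pi N Ge Be) (sBo : subgroup Bo)
  (br : forall g, exists w, dcoset pi N Bo w Be g /\ forall w', dcoset pi N Bo w' Be g -> w' = w).

Lemma twin_c Y0 (X : chamber Bo) (Y : component pi N Ge Be Y0) s : SS s ->
  exists Z : component pi N Ge Be Y0, dist_comp pi N Ge Be Y0 Y Z = s /\
    codist pi N Bo Be X (proj1_sig Z) = codist pi N Bo Be X (proj1_sig Y) * s.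
Proof. intro hs.
  pose proof (bn_sgB SS pi N Ge Be hBe) as sBe.
  destruct (ch_rep Bo X) as [g hg]. destruct (ch_rep Be (proj1_sig Y)) as [f hf].
  pose proof (codist_spec Bo Be sBo sBe br X _ g f hg hf) as c1.
  set (w := codist pi N Bo Be X (proj1_sig Y)) in *.
  destruct c1 as (n & a & c & hn & en & ha & hc & E1).
  destruct (bn_surj SS pi N Ge Be hBe s) as [m [hm em]].
  destruct (ch_rep Be Y0) as [y0 h0].
  pose proof (proj2_sig Y) as cY. simpl in cY. apply (connected_iff SS pi N Ge Be hBe _ _ y0 f h0 hf) in cY.
  assert (hc0 : connected pi N Ge Be Y0 (cham Be (f * c^-1 * m))).
  { apply (connected_iff SS pi N Ge Be hBe Y0 (cham Be (f * c^-1 * m)) y0 _ h0 eq_refl).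
    replace (y0^-1 * (f * c^-1 * m)) with ((y0^-1 * f) * c^-1 * m) by (gsimpl; auto).
    apply (GM SS pi N Ge Be hBe); [apply (GM SS pi N Ge Be hBe)|]; auto.
    apply (BG SS pi N Ge Be hBe). apply sgV; auto.
    apply (NG SS pi N Ge Be hBe); auto. }
  exists (exist _ (cham Be (f * c^-1 * m)) hc0). split.
  - apply (dist_comp_iff SS pi N Ge Be hBe Y0 Y (exist _ (cham Be (f * c^-1 * m)) hc0) f (f * c^-1 * m) s hf eq_refl).
    exists m, (c^-1), 1. repeat split; auto. apply sgV; auto. apply sg1; auto. gsimpl; auto.
  - apply (codist_eq Bo Be sBo sBe br X (cham Be (f * c^-1 * m)) g (f * c^-1 * m) _ hg eq_refl).
    exists (n * m), a, 1. split; [|split; [|split; [|split]]].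
    apply (NM SS pi N Ge Be hBe); auto.
    rewrite (bn_hom SS pi N Ge Be hBe), en, em; auto. auto. apply sg1; auto.
    replace (g^-1 * (f * c^-1 * m)) with ((g^-1 * f) * c^-1 * m) by (gsimpl; auto).
    rewrite E1. gsimpl. auto.
Qed.
End TC.

End Twin.
Open Scope grp_scope.

Theorem mainTheorem4 (G W : Group) (S : W -> Prop) (pi : G -> W)
  (N Gp Gm Bp Bm : G -> Prop)
  (Htwin : geometric_twinBN S pi N Gp Gm Bp Bm) :
  (* (1) *)
  part1 pi N S Gp Bp /\ part1 pi N S Gm Bm /\
  (* (2) *)
  (forall (X0 : chamber Bp) (Y0 : chamber Bm),
     twin_building S (component pi N Gp Bp X0) (component pi N Gm Bm Y0)
       (dist_comp pi N Gp Bp X0) (dist_comp pi N Gm Bm Y0)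
       (codist_comp pi N Gp Bp Gm Bm X0 Y0)
       (fun Y X => codist pi N Bm Bp (proj1_sig Y) (proj1_sig X))) /\
  (* (3) *)
  part3 pi N Gp Bp /\ part3 pi N Gm Bm.
Proof.
  destruct Htwin as (sGp & sGm & genG & BNp & BNm & tw & brp & brm).
  pose proof tw as (BNp' & BNm' & NBB & tbnp & tbnm & tbn2).
  pose proof (bn_sgB S pi N Gp Bp BNp) as sBp.
  pose proof (bn_sgB S pi N Gm Bm BNm) as sBm.
  pose proof (part1_proof S pi N Gp Bp BNp) as P1p.
  pose proof (part1_proof S pi N Gm Bm BNm) as P1m.
  split; [exact P1p|]. split; [exact P1m|].
  split; [|split; [apply (part3_proof S pi N Gp Bp BNp)|apply (part3_proof S pi N Gm Bm BNm)]].
  intros X0 Y0. unfold twin_building.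
  split; [apply P1p|]. split; [apply P1m|].
  split; [|split; [|split; [|split; [|split]]]].
  - intros X Y. unfold codist_comp.
    destruct (ch_rep Bp (proj1_sig X)) as [g hg]. destruct (ch_rep Bm (proj1_sig Y)) as [f hf].
    pose proof (codist_spec pi N Bm Bp sBm sBp brm _ _ f g hf hg) as c.
    apply (dc_inv S pi N Gp Bp BNp) in c; auto. rewrite invM, invK in c.
    apply (codist_eq pi N Bp Bm sBp sBm brp _ _ g f _ hg hf c).
  - intros Y X. unfold codist_comp.
    destruct (ch_rep Bp (proj1_sig X)) as [g hg]. destruct (ch_rep Bm (proj1_sig Y)) as [f hf].
    pose proof (codist_spec pi N Bp Bm sBp sBm brp _ _ g f hg hf) as c.
    apply (dc_inv S pi N Gp Bp BNp) in c; auto. rewrite invM, invK in c.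
    apply (codist_eq pi N Bm Bp sBm sBp brm _ _ f g _ hf hg c).
  - intros X Y Z w s. unfold codist_comp.
    apply (twin_b S pi N Gp Bp Gm Bm (setI Gp Gm) (setI Bp Gm) (setI Bm Gp) BNm BNm' BNp);
      try (intro; unfold setI; tauto); auto.
  - intros X Y Z w s. simpl.
    apply (twin_b S pi N Gm Bm Gp Bp (setI Gp Gm) (setI Bm Gp) (setI Bp Gm) BNp BNp' BNm);
      try (intro; unfold setI; tauto); auto.
  - intros X Y s hs. unfold codist_comp.
    apply (twin_c S pi N Bp Gm Bm BNm sBp brp Y0 (proj1_sig X) Y s hs).
  - intros X Y s hs. simpl.
    apply (twin_c S pi N Bm Gp Bp BNp sBm brm X0 (proj1_sig X) Y s hs).
Qed.
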